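(* Let $0<f_1<f_2<f_3$, let $2h=1$, and on $M_h$ let $F_L=\ell_{12}^2+\ell_{13}^2+\ell_{14}^2$ and $J_1=1-\sqrt{1-F_L}$. Then $J_1$ is an almost global $S^1$-action on $M_h$.
   Context: $\mathbf L=(\ell_{12},\ell_{13},\ell_{14},\ell_{23},\ell_{24},\ell_{34})\in\mathbb R^6\cong\mathfrak{so}(4)^*$ with the Lie–Poisson bracket of $\mathfrak{so}(4)$ (extending $\ell_{ji}=-\ell_{ij}$: $\{\ell_{ij},\ell_{jk}\}=-\ell_{ik}$ for distinct $i,j,k$, and $\{\ell_{ij},\ell_{kl}\}=0$ when $\{i,j\}\cap\{k,l\}=\emptyset$). $M_h=\{\mathbf L:\sum_{i<j}\ell_{ij}^2=2h,\ \ell_{12}\ell_{34}-\ell_{13}\ell_{24}+\ell_{14}\ell_{23}=0\}\cong S^2\times S^2$. Together with $G_L=f_1\ell_{34}^2+f_2\ell_{24}^2+f_3\ell_{23}^2$, $F_L$ forms the reduced Lamé integrable system. A function is an almost global $S^1$-action if its Hamiltonian vector field generates a $2\pi$-periodic flow (an $S^1$-action) everywhere except on the preimage of an isolated point of the image of the momentum map, where the function fails to be smooth / the vector field is undefined (here the set $F_L=1$, i.e. $\ell_{23}=\ell_{24}=\ell_{34}=0$). *)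

(* Defs.v *)
From Stdlib Require Import Reals List.
From Coquelicot Require Import Coquelicot.
Import ListNotations.
Open Scope R_scope.

(* A point L = (l12,l13,l14,l23,l24,l34) of R^6 ~ so(4)^*. *)
Record L6 := mkL6 { l12 : R; l13 : R; l14 : R; l23 : R; l24 : R; l34 : R }.

Definition ell (L : L6) (i j : nat) : R :=
  match i, j with
  | 1, 2 => l12 L | 1, 3 => l13 L | 1, 4 => l14 L
  | 2, 3 => l23 L | 2, 4 => l24 L | 3, 4 => l34 L
  | 2, 1 => - l12 L | 3, 1 => - l13 L | 4, 1 => - l14 L
  | 3, 2 => - l23 L | 4, 2 => - l24 L | 4, 3 => - l34 L
  | _, _ => 0
  end.

Definition kd (i j : nat) : R := if Nat.eqb i j then 1 else 0.

(* Lie-Poisson bracket of so(4)^* on the coordinate functions: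
   {l_ab, l_cd} = -(d_bc l_ad - d_bd l_ac - d_ac l_bd + d_ad l_bc),
   which is the bilinear extension of {l_ij, l_jk} = - l_ik (i,j,k distinct),
   {l_ij, l_kl} = 0 for disjoint index pairs, with l_ji = - l_ij. *)
Definition LP (L : L6) (a b c d : nat) : R :=
  - (kd b c * ell L a d - kd b d * ell L a c - kd a c * ell L b d + kd a d * ell L b c).

Definition pairs : list (nat * nat) := [(1,2);(1,3);(1,4);(2,3);(2,4);(3,4)]%nat.

Definition upd (L : L6) (i j : nat) (t : R) : L6 :=
  match i, j with
  | 1, 2 => mkL6 (l12 L + t) (l13 L) (l14 L) (l23 L) (l24 L) (l34 L)
  | 1, 3 => mkL6 (l12 L) (l13 L + t) (l14 L) (l23 L) (l24 L) (l34 L)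
  | 1, 4 => mkL6 (l12 L) (l13 L) (l14 L + t) (l23 L) (l24 L) (l34 L)
  | 2, 3 => mkL6 (l12 L) (l13 L) (l14 L) (l23 L + t) (l24 L) (l34 L)
  | 2, 4 => mkL6 (l12 L) (l13 L) (l14 L) (l23 L) (l24 L + t) (l34 L)
  | 3, 4 => mkL6 (l12 L) (l13 L) (l14 L) (l23 L) (l24 L) (l34 L + t)
  | _, _ => L
  end.

Definition partial (f : L6 -> R) (L : L6) (i j : nat) : R :=
  Derive (fun t => f (upd L i j t)) 0.

(* Hamiltonian vector field of f, component (a,b):  d l_ab / dt = {l_ab, f}
   = sum_{c<d} {l_ab, l_cd} * df/dl_cd. *)
Definition hvf (f : L6 -> R) (L : L6) (a b : nat) : R :=
  fold_right Rplus 0 (map (fun p => LP L a b (fst p) (snd p) * partial f L (fst p) (snd p)) pairs).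

Definition integral_at (f : L6 -> R) (gamma : R -> L6) (t : R) : Prop :=
  forall p, In p pairs ->
    is_derive (fun s => ell (gamma s) (fst p) (snd p)) t (hvf f (gamma t) (fst p) (snd p)).

Definition M_h (h : R) (L : L6) : Prop :=
  l12 L ^ 2 + l13 L ^ 2 + l14 L ^ 2 + l23 L ^ 2 + l24 L ^ 2 + l34 L ^ 2 = 2 * h /\
  l12 L * l34 L - l13 L * l24 L + l14 L * l23 L = 0.

Definition F_L (L : L6) : R := l12 L ^ 2 + l13 L ^ 2 + l14 L ^ 2.

Definition G_L (f1 f2 f3 : R) (L : L6) : R :=
  f1 * l34 L ^ 2 + f2 * l24 L ^ 2 + f3 * l23 L ^ 2.

Definition J1 (L : L6) : R := 1 - sqrt (1 - F_L L).

(* f is an almost global S^1-action on M_h, singular exactly on the set S: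
   through every point of M_h outside S there is a unique complete integral
   curve of X_f; it stays in M_h \ S and is 2*PI-periodic. *)
Definition almost_global_S1 (h : R) (f : L6 -> R) (S : L6 -> Prop) : Prop :=
  forall L0, M_h h L0 -> ~ S L0 ->
    exists gamma : R -> L6,
      gamma 0 = L0 /\
      (forall t, integral_at f gamma t) /\
      (forall t, M_h h (gamma t) /\ ~ S (gamma t)) /\
      (forall t, gamma (t + 2 * PI) = gamma t) /\
      (forall delta : R -> L6, delta 0 = L0 -> (forall t, integral_at f delta t) ->
         forall t, delta t = gamma t).

(* Main.v *)
Require Import Defs.
From Stdlib Require Import Reals Lra Psatz List Classical Nsatz.
From Coquelicot Require Import Coquelicot.
Open Scope R_scope.
Ltac fin H := repeat rewrite ?Rmult_1_r, ?Rmult_1_l, ?Rplus_0_r; unfold Rminus; field;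
  apply Rgt_not_eq, sqrt_lt_R0; unfold Rminus in H; lra.

Lemma part12 L : 0 < 1 - F_L L -> partial J1 L 1 2 = l12 L / sqrt (1 - F_L L).
Proof. intros H. unfold partial. apply is_derive_unique. unfold J1, F_L in *; simpl.
  auto_derive. lra. fin H. Qed.
Lemma part13 L : 0 < 1 - F_L L -> partial J1 L 1 3 = l13 L / sqrt (1 - F_L L).
Proof. intros H. unfold partial. apply is_derive_unique. unfold J1, F_L in *; simpl.
  auto_derive. lra. fin H. Qed.
Lemma part14 L : 0 < 1 - F_L L -> partial J1 L 1 4 = l14 L / sqrt (1 - F_L L).
Proof. intros H. unfold partial. apply is_derive_unique. unfold J1, F_L in *; simpl.
  auto_derive. lra. fin H. Qed.
Lemma partc L i j : (i = 2 /\ j = 3 \/ i = 2 /\ j = 4 \/ i = 3 /\ j = 4)%nat -> partial J1 L i j = 0.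
Proof. intros H. unfold partial. 
  rewrite (Derive_ext _ (fun _ => J1 L)). apply Derive_const.
  intros t; destruct H as [[-> ->]|[[-> ->]|[-> ->]]]; reflexivity. Qed.

Lemma hvf_good L (H : 0 < 1 - F_L L) :
  let s := sqrt (1 - F_L L) in
  hvf J1 L 1 2 = (l13 L * l23 L + l14 L * l24 L) / s /\
  hvf J1 L 1 3 = (- l12 L * l23 L + l14 L * l34 L) / s /\
  hvf J1 L 1 4 = (- l12 L * l24 L - l13 L * l34 L) / s /\
  hvf J1 L 2 3 = 0 /\ hvf J1 L 2 4 = 0 /\ hvf J1 L 3 4 = 0.
Proof.
  intros s. unfold hvf; simpl.
  rewrite (part12 L H), (part13 L H), (part14 L H), !partc by lia.
  unfold LP, kd, ell; simpl. fold s.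
  assert (s <> 0). { apply Rgt_not_eq, sqrt_lt_R0; lra. }
  repeat split; field; auto.
Qed.
Lemma cont_of (f : R -> R) x : ex_derive f x -> continuity_pt f x.
Proof. intros H. apply continuity_pt_filterlim. apply (ex_derive_continuous f x H). Qed.

Lemma const_on (f : R -> R) a b : a <= b -> (forall x, a <= x <= b -> is_derive f x 0) -> f b = f a.
Proof.
  intros Hab H.
  destruct (MVT_gen f a b (fun _ => 0)) as [c [_ Hc]].
  - intros x Hx. apply H. rewrite Rmin_left, Rmax_right in Hx by lra. lra.
  - intros x Hx. apply cont_of. eexists. apply H. rewrite Rmin_left, Rmax_right in Hx by lra. lra.
  - lra.
Qed.

Lemma const_all (f : R -> R) : (forall x, is_derive f x 0) -> forall t, f t = f 0.
Proof.
  intros H t. destruct (Rle_dec 0 t).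
  - apply const_on; auto.
  - symmetry. apply const_on; auto. lra.
Qed.

Lemma conn_fwd (g : R -> R) : (forall t, ex_derive g t) -> g 0 < 1 ->
  (forall t, g t < 1 -> is_derive g t 0) -> forall t1, 0 <= t1 -> g t1 = g 0.
Proof.
  intros Hd H0 Hz t1 Ht1.
  set (E := fun s => 0 <= s <= t1 /\ forall r, 0 <= r <= s -> g r = g 0).
  assert (HE0 : E 0). { split. lra. intros r Hr. replace r with 0 by lra. reflexivity. }
  assert (HB : bound E). { exists t1. intros s [Hs _]. lra. }
  destruct (completeness E HB (ex_intro _ 0 HE0)) as [b [Hub Hlub]].
  assert (Hb0 : 0 <= b) by (apply Hub; auto).
  assert (Hbt : b <= t1). { apply Hlub. intros s [Hs _]. lra. }
  assert (Hlt : forall r, 0 <= r < b -> g r = g 0).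
  { intros r Hr. destruct (Rlt_le_dec r b) as [_|]; [|lra].
    assert (~ is_upper_bound E r) as Hn.
    { intros Hu. specialize (Hlub r Hu). lra. }
    apply Classical_Pred_Type.not_all_ex_not in Hn. destruct Hn as [s Hs].
    apply Classical_Prop.imply_to_and in Hs. destruct Hs as [[Hs1 Hs2] Hs3].
    apply Hs2. lra. }
  assert (Hgb : g b = g 0).
  { destruct (Req_dec b 0) as [->|Hbn]; [reflexivity|].
    apply NNPP; intros Hne.
    pose proof (cont_of g b (Hd b)) as Hc.
    destruct (Hc (Rabs (g b - g 0)) ltac:(apply Rabs_pos_lt; lra)) as [al [Hal Hx]].
    set (r := Rmax 0 (b - al/2)).
    assert (Hr : 0 <= r < b). { unfold r. apply Rmax_case_strong; intros; lra. }
    specialize (Hx r). simpl in Hx. unfold R_dist in Hx.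
    rewrite (Hlt r Hr) in Hx.
    assert (Rabs (r - b) < al). { unfold r. apply Rmax_case_strong; intros; rewrite Rabs_left1; lra. }
    specialize (Hx (conj (conj I (Rgt_not_eq _ _ (proj2 Hr))) H)). rewrite <- Rabs_Ropp in Hx.
    replace (- (g 0 - g b)) with (g b - g 0) in Hx by ring. lra. }
  assert (Hbt1 : b = t1).
  { destruct (Rle_lt_or_eq_dec b t1 Hbt) as [Hl|]; auto. exfalso.
    pose proof (cont_of g b (Hd b)) as Hc.
    destruct (Hc (1 - g 0)) as [al [Hal Hx]]. lra.
    set (m := Rmin (b + al/2) t1).
    assert (Em : E m).
    { split. unfold m; apply Rmin_case_strong; intros; lra.
      intros r Hr. destruct (Rlt_le_dec r b). apply Hlt; lra.
      rewrite <- Hgb. apply const_on. lra.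
      intros x Hx'. apply Hz.
      assert (Rabs (x - b) < al). { rewrite Rabs_right by lra. unfold m in Hr.
        revert Hr; apply Rmin_case_strong; intros; lra. }
      destruct (Req_dec x b) as [->|Hxb]. lra.
      specialize (Hx x (conj (conj I (not_eq_sym Hxb)) H)). simpl in Hx. unfold R_dist in Hx.
      rewrite Hgb in Hx. apply Rabs_def2 in Hx. lra. }
    specialize (Hub m Em). unfold m in Hub. revert Hub; apply Rmin_case_strong; intros; lra. }
  subst b. exact Hgb.
Qed.

Lemma conn (g : R -> R) : (forall t, ex_derive g t) -> g 0 < 1 ->
  (forall t, g t < 1 -> is_derive g t 0) -> forall t, g t = g 0.
Proof.
  intros Hd H0 Hz t. destruct (Rle_dec 0 t). apply conn_fwd; auto.
  set (h := fun s => g (- s)).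
  assert (Hh : forall s, is_derive g (- s) 0 -> is_derive h s 0).
  { intros s Hs. unfold h.
    apply (is_derive_ext (fun x => g (- x))). reflexivity.
    assert (K : is_derive Ropp s (-1)) by (auto_derive; auto; ring).
    pose proof (is_derive_comp g Ropp s 0 (-1) Hs K) as K2. unfold scal in K2; simpl in K2; unfold mult in K2; simpl in K2. rewrite Rmult_0_r in K2. exact K2. }
  assert (HH : h (- t) = h 0).
  2:{ unfold h in HH. rewrite Ropp_involutive, Ropp_0 in HH. exact HH. }
  apply conn_fwd.
  - intros s. destruct (Hd (- s)) as [l Hl]. exists (scal (-1) l). unfold h.
    apply (is_derive_comp g Ropp s l (-1)). auto. auto_derive; auto; ring.
  - unfold h. rewrite Ropp_0. auto.
  - intros s Hs. apply Hh, Hz. auto.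
  - lra.
Qed.

Definition gam (x0 y0 z0 a b c k t : R) : L6 :=
  mkL6 (cos t * x0 + sin t * ((y0*a + z0*b) * / k))
       (cos t * y0 + sin t * ((-x0*a + z0*c) * / k))
       (cos t * z0 + sin t * ((-x0*b - y0*c) * / k)) a b c.

Lemma gam_F x0 y0 z0 a b c k t : k <> 0 -> k * k = a*a+b*b+c*c -> x0*c - y0*b + z0*a = 0 ->
  F_L (gam x0 y0 z0 a b c k t) = x0^2+y0^2+z0^2.
Proof.
  intros Hk Hk2 Hc. unfold F_L, gam; simpl.
  pose proof (sin2_cos2 t) as Hsc. unfold Rsqr in Hsc.
  set (ik := / k). assert (Hik : k * ik = 1) by (unfold ik; field; auto).
  clearbody ik. set (C := cos t) in *. set (S := sin t) in *. nsatz.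
Qed.

Ltac eta := try change (fun x : R => ?f x) with f.

Theorem lemma13 (f1 f2 f3 h : R) :
  0 < f1 -> f1 < f2 -> f2 < f3 -> 2 * h = 1 ->
  almost_global_S1 h J1 (fun L => F_L L = 1).
Proof.
  intros _ _ _ Hh L0 [HM1 HM2] HS.
  destruct L0 as [x0 y0 z0 a b c]; simpl in *.
  set (F0 := x0^2+y0^2+z0^2).
  assert (HF0 : F0 < 1).
  { unfold F_L in HS; simpl in HS. fold F0 in HS. 
    assert (F0 <= 1).
    { unfold F0. pose proof (pow2_ge_0 a). pose proof (pow2_ge_0 b). pose proof (pow2_ge_0 c). lra. }
    destruct (Rle_lt_or_eq_dec _ _ H) as [|E]; [auto|]. exfalso. apply HS. exact E. }
  set (k := sqrt (1 - F0)).
  assert (Hkp : 0 < k) by (apply sqrt_lt_R0; lra).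
  assert (Hk : k <> 0) by lra.
  assert (Hk2 : k * k = a*a+b*b+c*c).
  { unfold k. rewrite sqrt_sqrt by lra. unfold F0. simpl. lra. }
  assert (Hc : x0*c - y0*b + z0*a = 0) by lra.
  assert (HFg : forall t, F_L (gam x0 y0 z0 a b c k t) = F0).
  { intros t. apply gam_F; auto. }
  exists (gam x0 y0 z0 a b c k).
  split; [|split; [|split; [|split]]].
  - unfold gam. rewrite cos_0, sin_0. f_equal; ring.
  - intros t p Hp. simpl in Hp.
    assert (Hg : 0 < 1 - F_L (gam x0 y0 z0 a b c k t)) by (rewrite HFg; lra).
    destruct (hvf_good _ Hg) as [E12 [E13 [E14 [E23 [E24 E34]]]]].
    rewrite HFg in E12, E13, E14. fold k in E12, E13, E14.
    pose proof (sin2_cos2 t) as Hsc. unfold Rsqr in Hsc.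
    assert (Hik : k * / k = 1) by (field; auto).
    destruct Hp as [<-|[<-|[<-|[<-|[<-|[<-|[]]]]]]]; simpl fst; simpl snd;
      [rewrite E12|rewrite E13|rewrite E14|rewrite E23|rewrite E24|rewrite E34];
      unfold ell, gam; simpl; auto_derive; auto;
      unfold Rdiv; clear - Hsc Hik Hk2 Hc; set (ik := / k) in *; clearbody ik;
      set (C := cos t) in *; set (S := sin t) in *; nsatz.
  - intros t. split.
    + split.
      * pose proof (HFg t) as E. unfold F_L in E. simpl in E |- *. unfold F0 in E. nra.
      * unfold gam; simpl. 
        set (ik := / k). set (C := cos t). set (S := sin t). nsatz.
    + rewrite HFg. lra.
  - intros t. unfold gam. rewrite cos_plus, sin_plus, cos_2PI, sin_2PI. f_equal; ring.
  - intros delta Hd0 Hint.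
    set (X := fun s => l12 (delta s)). set (Y := fun s => l13 (delta s)).
    set (Z := fun s => l14 (delta s)). set (A := fun s => l23 (delta s)).
    set (B := fun s => l24 (delta s)). set (Cc := fun s => l34 (delta s)).
    assert (Hrep : forall t, delta t = mkL6 (X t) (Y t) (Z t) (A t) (B t) (Cc t)).
    { intros t. unfold X, Y, Z, A, B, Cc. destruct (delta t); reflexivity. }
    assert (D12 : forall t, is_derive X t (hvf J1 (delta t) 1 2))
      by (intros t; exact (Hint t (1%nat,2%nat) ltac:(simpl; tauto))).
    assert (D13 : forall t, is_derive Y t (hvf J1 (delta t) 1 3))
      by (intros t; exact (Hint t (1%nat,3%nat) ltac:(simpl; tauto))).
    assert (D14 : forall t, is_derive Z t (hvf J1 (delta t) 1 4))
      by (intros t; exact (Hint t (1%nat,4%nat) ltac:(simpl; tauto))).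
    assert (D23 : forall t, is_derive A t (hvf J1 (delta t) 2 3))
      by (intros t; exact (Hint t (2%nat,3%nat) ltac:(simpl; tauto))).
    assert (D24 : forall t, is_derive B t (hvf J1 (delta t) 2 4))
      by (intros t; exact (Hint t (2%nat,4%nat) ltac:(simpl; tauto))).
    assert (D34 : forall t, is_derive Cc t (hvf J1 (delta t) 3 4))
      by (intros t; exact (Hint t (3%nat,4%nat) ltac:(simpl; tauto))).
    assert (H0s : X 0 = x0 /\ Y 0 = y0 /\ Z 0 = z0 /\ A 0 = a /\ B 0 = b /\ Cc 0 = c).
    { unfold X, Y, Z, A, B, Cc. rewrite Hd0. simpl. tauto. }
    clearbody X Y Z A B Cc. clear Hint.
    destruct H0s as [X0 [Y0 [Z0 [A0 [B0 C0]]]]].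
    set (G := fun t => X t ^ 2 + Y t ^ 2 + Z t ^ 2).
    assert (HGF : forall t, F_L (delta t) = G t) by (intros t; rewrite Hrep; reflexivity).
    assert (HGc : forall t, G t = G 0).
    { apply conn.
      - intros t. unfold G. auto_derive; repeat split; eexists; eauto.
      - unfold G. rewrite X0, Y0, Z0. fold F0. auto.
      - intros t Ht. 
        assert (Hg : 0 < 1 - F_L (delta t)) by (rewrite HGF; lra).
        destruct (hvf_good _ Hg) as [E12 [E13 [E14 _]]].
        pose proof (D12 t) as d12. pose proof (D13 t) as d13. pose proof (D14 t) as d14.
        rewrite E12 in d12. rewrite E13 in d13. rewrite E14 in d14.
        rewrite Hrep in d12, d13, d14. simpl in d12, d13, d14.
        unfold G. auto_derive.
        + repeat split; eexists; eauto.
        + eta. rewrite (is_derive_unique _ _ _ d12), (is_derive_unique _ _ _ d13), (is_derive_unique _ _ _ d14).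
          unfold Rdiv. ring. }
    assert (HG0 : forall t, G t = F0).
    { intros t. rewrite HGc. unfold G. rewrite X0, Y0, Z0. reflexivity. }
    assert (Hgood : forall t, 0 < 1 - F_L (delta t)) by (intros t; rewrite HGF, HG0; lra).
    assert (Hsk : forall t, sqrt (1 - F_L (delta t)) = k) by (intros t; rewrite HGF, HG0; reflexivity).
    assert (HA : forall t, A t = a /\ B t = b /\ Cc t = c).
    { intros t. destruct (hvf_good _ (Hgood t)) as [_ [_ [_ [E23 [E24 E34]]]]].
      rewrite <- A0, <- B0, <- C0. repeat split; apply const_all; intros s;
      destruct (hvf_good _ (Hgood s)) as [_ [_ [_ [F23 [F24 F34]]]]].
      rewrite <- F23; auto. rewrite <- F24; auto. rewrite <- F34; auto. }
    assert (DX : forall t, is_derive X t ((Y t * a + Z t * b) * / k) /\ is_derive Y t ((- X t * a + Z t * c) * / k) /\ is_derive Z t ((- X t * b - Y t * c) * / k)).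
    { intros t. destruct (hvf_good _ (Hgood t)) as [E12 [E13 [E14 _]]].
      rewrite Hsk in E12, E13, E14. rewrite Hrep in E12, E13, E14. simpl in E12, E13, E14.
      destruct (HA t) as [Ha [Hb Hc']]. rewrite <- Ha, <- Hb, <- Hc'.
      unfold Rdiv in E12, E13, E14. split; [|split].
      - rewrite <- E12, <- Hrep. auto.
      - rewrite <- E13, <- Hrep. auto.
      - rewrite <- E14, <- Hrep. auto. }
    assert (Hik : k * / k = 1) by (field; auto).
    assert (Hcons : forall t, X t * c - Y t * b + Z t * a = 0).
    { intros t.
      assert (Hd : forall s, is_derive (fun t => X t * c - Y t * b + Z t * a) s 0).
      { intros s. destruct (DX s) as [dx [dy dz]].
        auto_derive. repeat split; eexists; eauto.
        eta. rewrite (is_derive_unique _ _ _ dx), (is_derive_unique _ _ _ dy), (is_derive_unique _ _ _ dz).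
        ring. }
      pose proof (const_all _ Hd t) as E. simpl in E. rewrite E, X0, Y0, Z0. exact Hc. }
    assert (HW : forall t,
      cos t * X t - sin t * ((Y t * a + Z t * b) * / k) = x0 /\
      cos t * Y t - sin t * ((- X t * a + Z t * c) * / k) = y0 /\
      cos t * Z t - sin t * ((- X t * b - Y t * c) * / k) = z0).
    { assert (Hd : forall s,
        is_derive (fun t => cos t * X t - sin t * ((Y t * a + Z t * b) * / k)) s 0 /\
        is_derive (fun t => cos t * Y t - sin t * ((- X t * a + Z t * c) * / k)) s 0 /\
        is_derive (fun t => cos t * Z t - sin t * ((- X t * b - Y t * c) * / k)) s 0).
      { intros s; destruct (DX s) as [dx [dy dz]]; pose proof (Hcons s) as Hcs;
        pose proof (sin2_cos2 s) as Hsc; unfold Rsqr in Hsc.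
        split; [|split]; 
        (auto_derive; [repeat split; eexists; eauto|]);
        eta; rewrite ?(is_derive_unique _ _ _ dx), ?(is_derive_unique _ _ _ dy), ?(is_derive_unique _ _ _ dz);
        clear - Hcs Hsc Hik Hk2; set (ik := / k) in *; clearbody ik;
        set (C := cos s) in *; set (S := sin s) in *; nsatz. }
      intros t. 
      pose proof (const_all _ (fun s => proj1 (Hd s)) t) as E1.
      pose proof (const_all _ (fun s => proj1 (proj2 (Hd s))) t) as E2.
      pose proof (const_all _ (fun s => proj2 (proj2 (Hd s))) t) as E3.
      simpl in E1, E2, E3. rewrite cos_0, sin_0 in E1, E2, E3.
      rewrite E1, E2, E3, X0, Y0, Z0. repeat split; ring. }
    intros t. rewrite Hrep. destruct (HA t) as [-> [-> ->]].
    destruct (HW t) as [W1 [W2 W3]]. pose proof (Hcons t) as Hcs.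
    pose proof (sin2_cos2 t) as Hsc. unfold Rsqr in Hsc.
    unfold gam. rewrite <- W1, <- W2, <- W3. f_equal;
      clear - Hcs Hsc Hik Hk2; set (ik := / k) in *; clearbody ik;
      set (C := cos t) in *; set (S := sin t) in *; nsatz.
Qed.
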